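(* Let $\mathcal{K}^{\langle\infty\rangle}$ be an unbounded simple nested fractal. For every $M\in\mathbb{Z}$ there exist positive constants $C_6(M),C_7(M)$ such that for all $x,y\in\mathcal{K}^{\langle\infty\rangle}$, $$C_6(M)\,|x-y|\le d_M(x,y)\le\max\{2,\ C_7(M)\,|x-y|^{d_f}\},$$ where $d_f=\log N/\log L$.
   Context: Setting: $L>1$, $N\ge2$, $\nu_1=0,\dots,\nu_N\in\mathbb{R}^2$, $\Psi_i(x)=x/L+\nu_i$, and $\mathcal{K}^{\langle 0\rangle}=\bigcup_i\Psi_i(\mathcal{K}^{\langle 0\rangle})$ is a planar simple nested fractal (with $V_0^{\langle0\rangle}$ its set of essential fixed points, $k=\#V_0^{\langle0\rangle}\ge3$). $\mathcal{K}^{\langle M\rangle}=L^M\mathcal{K}^{\langle 0\rangle}$, $\mathcal{K}^{\langle\infty\rangle}=\bigcup_{M\ge0}\mathcal{K}^{\langle M\rangle}$. An $M$-complex is $\mathcal{K}^{\langle M\rangle}+\sum_{j=M+1}^{J}L^j\nu_{i_j}$ ($J\ge M+1$, $i_j\in\{1,\dots,N\}$); $\mathcal{T}_M$ is the set of all $M$-complexes. The $M$-graph distance: $d_M(x,y)=0$ if $x=y$; $d_M(x,y)=1$ if $x\ne y$ and some $\Delta_M\in\mathcal{T}_M$ contains both; otherwise $d_M(x,y)$ is the smallest $n>1$ for which there exist $\Delta_M^{(1)},\dots,\Delta_M^{(n)}\in\mathcal{T}_M$ with $x\in\Delta_M^{(1)}$, $y\in\Delta_M^{(n)}$ and $\Delta_M^{(i)}\cap\Delta_M^{(i+1)}\ne\emptyset$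 for $1\le i\le n-1$. $|\cdot|$ is the Euclidean norm. *)

(* Defs.v *)
From Stdlib Require Import Reals Lra List ZArith Relations.
Open Scope R_scope.

Definition pt := (R * R)%type.
Definition padd (p q : pt) : pt := (fst p + fst q, snd p + snd q).
Definition psub (p q : pt) : pt := (fst p - fst q, snd p - snd q).
Definition pscale (c : R) (p : pt) : pt := (c * fst p, c * snd p).
Definition pdot (p q : pt) : R := fst p * fst q + snd p * snd q.
Definition pnorm (p : pt) : R := sqrt (pdot p p).
Definition pdist (p q : pt) : R := pnorm (psub p q).
Definition pzero : pt := (0, 0).

Definition open_set (U : pt -> Prop) : Prop :=
  forall p, U p -> exists e, 0 < e /\ forall q, pdist p q < e -> U q.
Definition closed_set (A : pt -> Prop) : Prop :=
  forall p, ~ A p -> exists e, 0 < e /\ forall q, pdist p q < e -> ~ A q.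
Definition bounded_set (A : pt -> Prop) : Prop :=
  exists r, forall p, A p -> pnorm p <= r.

Definition Psi (L : R) (nu : nat -> pt) (i : nat) (x : pt) : pt :=
  padd (pscale (/ L) x) (nu i).
Definition idx_ok (N i : nat) : Prop := (1 <= i <= N)%nat.
Definition Psiw (L : R) (nu : nat -> pt) (w : list nat) (x : pt) : pt :=
  fold_right (fun i acc => Psi L nu i acc) x w.
Definition word_ok (N : nat) (w : list nat) : Prop := Forall (idx_ok N) w.

Definition img (f : pt -> pt) (A : pt -> Prop) : pt -> Prop :=
  fun z => exists a, A a /\ z = f a.

Definition is_attractor (L : R) (N : nat) (nu : nat -> pt) (K : pt -> Prop) : Prop :=
  (exists p, K p) /\ closed_set K /\ bounded_set K /\
  (forall z, K z <-> exists i, idx_ok N i /\ img (Psi L nu i) K z).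

Definition essential_fixed (L : R) (N : nat) (nu : nat -> pt) (x : pt) : Prop :=
  (exists i, idx_ok N i /\ Psi L nu i x = x) /\
  exists y j k l, idx_ok N j /\ Psi L nu j y = y /\ idx_ok N k /\ idx_ok N l /\
    k <> l /\ Psi L nu k x = Psi L nu l y.

Definition Vn (L : R) (N : nat) (nu : nat -> pt) (n : nat) (z : pt) : Prop :=
  exists w v, length w = n /\ word_ok N w /\ essential_fixed L N nu v /\ z = Psiw L nu w v.

(* reflection with respect to the perpendicular bisector of the segment [x, y] *)
Definition refl (x y z : pt) : pt :=
  let u := psub x y in
  let m := pscale (/ 2) (padd x y) in
  psub z (pscale (2 * pdot (psub z m) u / pdot u u) u).

Definition V1_edge (L : R) (N : nat) (nu : nat -> pt) (x y : pt) : Prop :=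
  Vn L N nu 1 x /\ Vn L N nu 1 y /\
  exists i, idx_ok N i /\ img (Psi L nu i) (essential_fixed L N nu) x /\
            img (Psi L nu i) (essential_fixed L N nu) y.

Definition simple_nested_fractal (L : R) (N : nat) (nu : nat -> pt) (K0 : pt -> Prop) : Prop :=
  is_attractor L N nu K0 /\
  (exists a b, a <> b /\ essential_fixed L N nu a /\ essential_fixed L N nu b) /\
  (exists U, open_set U /\ (exists p, U p) /\ bounded_set U /\
     (forall i, idx_ok N i -> forall z, img (Psi L nu i) U z -> U z) /\
     (forall i j, idx_ok N i -> idx_ok N j -> i <> j -> forall z,
        img (Psi L nu i) U z -> ~ img (Psi L nu j) U z)) /\
  (forall i j, idx_ok N i -> idx_ok N j -> i <> j -> forall z,
     (img (Psi L nu i) K0 z /\ img (Psi L nu j) K0 z) <->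
     (img (Psi L nu i) (essential_fixed L N nu) z /\
      img (Psi L nu j) (essential_fixed L N nu) z)) /\
  (forall x y, essential_fixed L N nu x -> essential_fixed L N nu y -> x <> y ->
     forall n z, Vn L N nu n z -> Vn L N nu n (refl x y z)) /\
  (forall x y, Vn L N nu 1 x -> Vn L N nu 1 y ->
     clos_refl_trans pt (V1_edge L N nu) x y).

Definition Kinf (L : R) (K0 : pt -> Prop) (x : pt) : Prop :=
  exists M : nat, img (pscale (L ^ M)) K0 x.

(* the M-complex  L^M K0 + sum_{j=M+1}^{J} L^j nu_{i_j}, with J = M + 1 + m
   and i_{M+1+t} = iota t *)
Definition shift (L : R) (nu : nat -> pt) (M : Z) (m : nat) (iota : nat -> nat) : pt :=
  fold_right padd pzero
    (map (fun t => pscale (powerRZ L (M + 1 + Z.of_nat t)) (nu (iota t))) (seq 0 (S m))).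
Definition complex (L : R) (nu : nat -> pt) (K0 : pt -> Prop) (M : Z) (m : nat)
  (iota : nat -> nat) : pt -> Prop :=
  img (fun k => padd (pscale (powerRZ L M) k) (shift L nu M m iota)) K0.
Definition is_complex (L : R) (N : nat) (nu : nat -> pt) (K0 : pt -> Prop) (M : Z)
  (D : pt -> Prop) : Prop :=
  exists m iota, (forall t, (t <= m)%nat -> idx_ok N (iota t)) /\
    (forall z, D z <-> complex L nu K0 M m iota z).

Definition chain (L : R) (N : nat) (nu : nat -> pt) (K0 : pt -> Prop) (M : Z)
  (x y : pt) (n : nat) : Prop :=
  (1 <= n)%nat /\ exists D : nat -> pt -> Prop,
    (forall i, (i < n)%nat -> is_complex L N nu K0 M (D i)) /\
    D 0%nat x /\ D (n - 1)%nat y /\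
    (forall i, (i + 1 < n)%nat -> exists z, D i z /\ D (i + 1)%nat z).

Definition dM_is (L : R) (N : nat) (nu : nat -> pt) (K0 : pt -> Prop) (M : Z)
  (x y : pt) (n : nat) : Prop :=
  (x = y /\ n = 0%nat) \/
  (x <> y /\ chain L N nu K0 M x y n /\ forall m, chain L N nu K0 M x y m -> (n <= m)%nat).

Definition rpow (a b : R) : R := if Req_EM_T a 0 then 0 else Rpower a b.

(* Main.v *)
Require Import Defs.
From Stdlib Require Import Reals ZArith.
From Stdlib Require Import Lra Lia Psatz List Relations Classical ClassicalEpsilon.
Open Scope R_scope.

Ltac pdes := repeat match goal with p : pt |- _ => destruct p end.
Ltac pext := unfold padd, psub, pscale, pzero; simpl; f_equal.

Lemma pnorm_nonneg p : 0 <= pnorm p.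
Proof. apply sqrt_pos. Qed.

Lemma pnorm_scale c p : pnorm (pscale c p) = Rabs c * pnorm p.
Proof.
  destruct p as [a b]; unfold pnorm, pdot, pscale; simpl.
  replace (c * a * (c * a) + c * b * (c * b)) with ((c*c) * (a*a+b*b)) by ring.
  rewrite sqrt_mult_alt by nra. rewrite <- sqrt_Rsqr_abs. reflexivity.
Qed.

Lemma pnorm_triangle p q : pnorm (padd p q) <= pnorm p + pnorm q.
Proof.
  destruct p as [a b], q as [c d]; unfold pnorm, pdot, padd; simpl.
  set (A := a*a+b*b). set (B := c*c+d*d).
  assert (hA : 0 <= A) by (unfold A; nra). assert (hB : 0 <= B) by (unfold B; nra).
  pose proof (sqrt_pos A) as sA. pose proof (sqrt_pos B) as sB.
  pose proof (sqrt_sqrt A hA) as eA. pose proof (sqrt_sqrt B hB) as eB.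
  rewrite <- (sqrt_square (sqrt A + sqrt B)) by lra.
  apply sqrt_le_1_alt.
  assert (Hcs : a*c+b*d <= sqrt A * sqrt B).
  { assert (H2 : (a*c+b*d)*(a*c+b*d) <= (sqrt A * sqrt B)*(sqrt A * sqrt B)).
    { replace ((sqrt A * sqrt B)*(sqrt A * sqrt B)) with ((sqrt A * sqrt A) * (sqrt B * sqrt B)) by ring.
      rewrite eA, eB. unfold A, B.
      pose proof (Rle_0_sqr (a*d-b*c)) as hs; unfold Rsqr in hs.
      assert (E: (a*a+b*b)*(c*c+d*d) = (a*c+b*d)*(a*c+b*d) + (a*d-b*c)*(a*d-b*c)) by ring. lra. }
    assert (0 <= sqrt A * sqrt B) by (apply Rmult_le_pos; lra).
    destruct (Rle_dec (a*c+b*d) (sqrt A * sqrt B)) as [h|h]; [exact h|].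
    apply Rnot_le_lt in h. exfalso.
    assert ((sqrt A * sqrt B)*(sqrt A * sqrt B) < (a*c+b*d)*(a*c+b*d)) by (apply Rmult_le_0_lt_compat; lra). lra. }
  unfold A, B in *. nra.
Qed.

Lemma pnorm_zero p : pnorm p = 0 -> p = pzero.
Proof.
  destruct p as [a b]; unfold pnorm, pdot; simpl; intro H.
  apply sqrt_eq_0 in H; [|nra].
  unfold pzero; f_equal; nra.
Qed.

Lemma pnorm_fst p : Rabs (fst p) <= pnorm p.
Proof.
  destruct p as [a b]; unfold pnorm, pdot; simpl.
  rewrite <- sqrt_Rsqr_abs. apply sqrt_le_1_alt. unfold Rsqr. nra.
Qed.

Lemma pnorm_snd p : Rabs (snd p) <= pnorm p.
Proof.
  destruct p as [a b]; unfold pnorm, pdot; simpl.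
  rewrite <- sqrt_Rsqr_abs. apply sqrt_le_1_alt. unfold Rsqr. nra.
Qed.

Lemma pnorm_le_coords p : pnorm p <= Rabs (fst p) + Rabs (snd p).
Proof.
  destruct p as [a b]; unfold pnorm, pdot; simpl.
  rewrite <- (sqrt_square (Rabs a + Rabs b)) by (pose proof (Rabs_pos a); pose proof (Rabs_pos b); lra).
  apply sqrt_le_1_alt.
  pose proof (Rabs_pos a); pose proof (Rabs_pos b).
  assert (Rabs a * Rabs a = a * a) by (rewrite <- Rabs_mult; apply Rabs_right; nra).
  assert (Rabs b * Rabs b = b * b) by (rewrite <- Rabs_mult; apply Rabs_right; nra).
  nra.
Qed.

Lemma psub_padd p q : psub p q = padd p (pscale (-1) q).
Proof. pdes; pext; ring. Qed.

Lemma pnorm_opp p : pnorm (pscale (-1) p) = pnorm p.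
Proof. rewrite pnorm_scale. replace (Rabs (-1)) with 1 by (rewrite Rabs_left; lra). ring. Qed.

Lemma pnorm_sub_sym p q : pnorm (psub p q) = pnorm (psub q p).
Proof.
  replace (psub p q) with (pscale (-1) (psub q p)) by (pdes; pext; ring).
  apply pnorm_opp.
Qed.

Lemma pnorm_sub_tri p q r : pnorm (psub p r) <= pnorm (psub p q) + pnorm (psub q r).
Proof.
  replace (psub p r) with (padd (psub p q) (psub q r)) by (pdes; pext; ring).
  apply pnorm_triangle.
Qed.

Lemma pnorm_sub_le p q : pnorm (psub p q) <= pnorm p + pnorm q.
Proof. rewrite psub_padd. eapply Rle_trans; [apply pnorm_triangle|]. rewrite pnorm_opp; lra. Qed.

Definition strict (phi : nat -> nat) := forall n, (phi n < phi (S n))%nat.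

Lemma strict_ge phi : strict phi -> forall n, (n <= phi n)%nat.
Proof. intros h n; induction n; [lia|]. specialize (h n). lia. Qed.

Lemma strict_mono phi : strict phi -> forall n m, (n <= m)%nat -> (phi n <= phi m)%nat.
Proof.
  intros h n m hnm. induction hnm; [lia|]. specialize (h m). lia.
Qed.

Lemma strict_comp f g : strict f -> strict g -> strict (fun n => f (g n)).
Proof.
  intros hf hg n. assert (h := hg n).
  assert (f (S (g n)) <= f (g (S n)))%nat by (apply strict_mono; auto).
  specialize (hf (g n)). lia.
Qed.

Lemma small_n eps : 0 < eps -> exists N0, forall n, (N0 <= n)%nat -> / INR (S n) < eps.
Proof.
  intros he. destruct (archimed_cor1 eps he) as [N0 [h1 h2]]. exists N0. intros n hn.
  eapply Rle_lt_trans; [|exact h1].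
  apply Rinv_le_contravar. apply lt_0_INR; lia. apply le_INR; lia.
Qed.

Definition rconv (u : nat -> R) (l : R) :=
  forall eps, 0 < eps -> exists N0, forall n, (N0 <= n)%nat -> Rabs (u n - l) < eps.

Lemma rconv_sub u l phi : rconv u l -> strict phi -> rconv (fun n => u (phi n)) l.
Proof.
  intros h hp eps he. destruct (h eps he) as [N0 hN]. exists N0. intros n hn.
  apply hN. pose proof (strict_ge phi hp n). lia.
Qed.

Lemma sub1 (u : nat -> R) r : (forall n, -r <= u n <= r) ->
  exists phi l, strict phi /\ rconv (fun n => u (phi n)) l.
Proof.
  intros hb.
  destruct (Bolzano_Weierstrass u (fun c => -r <= c <= r) (compact_P3 (-r) r) hb) as [l hl].
  assert (H : forall N0 k : nat, exists p, (N0 <= p)%nat /\ Rabs (u p - l) < / INR (S k)).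
  { intros N0 k.
    assert (hpos : 0 < / INR (S k)) by (apply Rinv_0_lt_compat, lt_0_INR; lia).
    destruct (hl (disc l (mkposreal _ hpos)) N0) as [p [hp hv]].
    - exists (mkposreal _ hpos). intros y hy; exact hy.
    - exists p; split; auto. }
  set (g := fun N0 k => proj1_sig (constructive_indefinite_description _ (H N0 k))).
  assert (hg : forall N0 k, (N0 <= g N0 k)%nat /\ Rabs (u (g N0 k) - l) < / INR (S k)).
  { intros N0 k. unfold g. destruct (constructive_indefinite_description _ (H N0 k)); simpl; auto. }
  set (phi := fix phi (n : nat) : nat := match n with O => g O O | S n => g (S (phi n)) (S n) end).
  exists phi, l. split.
  - intros n. simpl. destruct (hg (S (phi n)) (S n)). lia.
  - assert (hp : forall n, Rabs (u (phi n) - l) < / INR (S n)).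
    { intros [|n]; simpl; [apply hg|apply hg]. }
    intros eps he. destruct (small_n eps he) as [N0 hN]. exists N0. intros n hn.
    eapply Rlt_trans; [apply hp|]. apply hN; auto.
Qed.

Lemma abs_bounds a b : Rabs a <= b -> -b <= a <= b.
Proof. intros h. destruct (Rcase_abs a) as [h1|h1]; [rewrite Rabs_left in h|rewrite Rabs_right in h]; lra. Qed.
Section Frac.
Variables (L : R) (N : nat) (nu : nat -> pt) (K0 : pt -> Prop).
Hypothesis HL : 1 < L.
Hypothesis HN : (2 <= N)%nat.
Hypothesis Hnu1 : nu 1%nat = pzero.
Hypothesis Hsnf : simple_nested_fractal L N nu K0.

Notation ok := (idx_ok N).
Notation V0 := (essential_fixed L N nu).
Notation Ps := (Psi L nu).

Lemma K0_ne : exists p, K0 p.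
Proof. destruct Hsnf as [[H _] _]; exact H. Qed.
Lemma K0_closed : Defs.closed_set K0.
Proof. destruct Hsnf as [[_ [H _]] _]; exact H. Qed.
Lemma K0_bounded : Defs.bounded_set K0.
Proof. destruct Hsnf as [[_ [_ [H _]]] _]; exact H. Qed.
Lemma K0_self z : K0 z <-> exists i, ok i /\ img (Ps i) K0 z.
Proof. destruct Hsnf as [[_ [_ [_ H]]] _]; apply H. Qed.
Lemma nesting i j : ok i -> ok j -> i <> j -> forall z,
  img (Ps i) K0 z -> img (Ps j) K0 z -> img (Ps i) V0 z.
Proof.
  intros hi hj hij z h1 h2. destruct Hsnf as [_ [_ [_ [H _]]]].
  apply (H i j hi hj hij z); auto.
Qed.
Lemma V1conn x y : Vn L N nu 1 x -> Vn L N nu 1 y -> clos_refl_trans pt (V1_edge L N nu) x y.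
Proof. destruct Hsnf as [_ [_ [_ [_ [_ H]]]]]. apply H. Qed.
Lemma V0_ne : exists v, V0 v.
Proof. destruct Hsnf as [_ [[a [b [_ [H _]]]] _]]. eauto. Qed.

Lemma Lpos : 0 < L. Proof. lra. Qed.
Lemma Lneq : L <> 0. Proof. lra. Qed.

Lemma pw_pos m : 0 < powerRZ L m.
Proof. apply powerRZ_lt; lra. Qed.

Lemma pw_S m : powerRZ L (m+1) = powerRZ L m * L.
Proof. rewrite powerRZ_add by lra. simpl. ring. Qed.

Lemma pw_nat m (k : nat) : powerRZ L (m + Z.of_nat k) = powerRZ L m * L ^ k.
Proof. rewrite powerRZ_add by lra. rewrite pow_powerRZ. reflexivity. Qed.

Lemma pow_ge1 k : 1 <= L ^ k.
Proof. induction k; simpl; nra. Qed.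

Lemma pw_mono m k : powerRZ L m <= powerRZ L (m + Z.of_nat k).
Proof. rewrite pw_nat. pose proof (pw_pos m). pose proof (pow_ge1 k). nra. Qed.

Fixpoint sh (m : Z) (l : list nat) : pt :=
  match l with
  | nil => pzero
  | i :: l' => padd (pscale (powerRZ L (m+1)) (nu i)) (sh (m+1) l')
  end.

Definition cx (m : Z) (l : list nat) : pt -> Prop :=
  img (fun k => padd (pscale (powerRZ L m) k) (sh m l)) K0.

Definition okl (l : list nat) := Forall ok l.

Lemma id_cons m i l k : padd (pscale (powerRZ L m) k) (sh m (i::l)) =
  padd (pscale (powerRZ L (m+1)) (Ps i k)) (sh (m+1) l).
Proof.
  simpl sh. rewrite pw_S. unfold Psi. pose proof Lneq. pdes; pext; field; auto.
Qed.

Lemma K1 m l z : cx (m+1) l z <-> exists i, ok i /\ cx m (i::l) z.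
Proof.
  split.
  - intros [k [hk ->]]. apply K0_self in hk as [i [hi [k' [hk' ->]]]].
    exists i; split; auto. exists k'; split; auto. rewrite id_cons; reflexivity.
  - intros [i [hi [k [hk ->]]]]. rewrite id_cons. exists (Ps i k); split; auto.
    apply K0_self. exists i; split; auto. exists k; auto.
Qed.

Lemma cx_cons m i l z : cx m (i::l) z <->
  exists k, K0 k /\ z = padd (pscale (powerRZ L (m+1)) (Ps i k)) (sh (m+1) l).
Proof.
  split; intros [k [hk ->]]; exists k; split; auto; rewrite id_cons; auto.
Qed.

Lemma sh_rep m t : sh m (repeat 1%nat t) = pzero.
Proof.
  revert m; induction t; intros m; simpl; auto.
  rewrite IHt, Hnu1. pext; ring.
Qed.

Lemma sh_pad m l t : sh m (l ++ repeat 1%nat t) = sh m l.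
Proof.
  revert m; induction l; intros m; simpl.
  - apply sh_rep.
  - rewrite IHl; auto.
Qed.

Lemma cx_pad m l t z : cx m (l ++ repeat 1%nat t) z <-> cx m l z.
Proof. unfold cx. rewrite sh_pad. tauto. Qed.

Lemma okl_pad l t : okl l -> okl (l ++ repeat 1%nat t).
Proof.
  intros h. apply Forall_app; split; auto.
  apply Forall_forall. intros x hx. apply repeat_spec in hx. subst. red; lia.
Qed.

Lemma cx_up m z : cx m nil z -> cx (m+1) nil z.
Proof.
  intros h. apply K1. exists 1%nat. split; [red; lia|].
  apply (cx_pad m nil 1) in h. exact h.
Qed.

Lemma cx_down (t : nat) : forall m l z, cx (m + Z.of_nat t) l z ->
  exists w, length w = t /\ okl w /\ cx m (w ++ l) z.
Proof.
  induction t; intros m l z h.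
  - exists nil. simpl in *. rewrite Z.add_0_r in h. repeat split; auto. constructor.
  - replace (m + Z.of_nat (S t))%Z with ((m + 1) + Z.of_nat t)%Z in h by lia.
    destruct (IHt (m+1)%Z l z h) as [w [hl [hw hz]]].
    apply K1 in hz as [i [hi hz]].
    exists (i :: w). simpl. repeat split; auto. constructor; auto.
Qed.

Lemma Kinf_cx x : Kinf L K0 x -> forall n, exists l, okl l /\ cx n l x.
Proof.
  intros [m [k [hk ->]]] n.
  assert (h0 : cx (Z.of_nat m) nil (pscale (L ^ m) k)).
  { exists k; split; auto. rewrite pow_powerRZ. simpl. pext; ring. }
  destruct (Z_le_gt_dec n (Z.of_nat m)) as [hle|hgt].
  - replace (Z.of_nat m) with (n + Z.of_nat (Z.to_nat (Z.of_nat m - n)))%Z in h0 by lia.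
    apply cx_down in h0 as [w [_ [hw hz]]]. exists (w ++ nil); split; auto.
    apply Forall_app; split; auto.
  - exists nil; split; [constructor|].
    replace n with (Z.of_nat m + Z.of_nat (Z.to_nat (n - Z.of_nat m)))%Z by lia.
    generalize (Z.to_nat (n - Z.of_nat m)). intros t. induction t.
    + simpl. rewrite Z.add_0_r. auto.
    + replace (Z.of_nat m + Z.of_nat (S t))%Z with ((Z.of_nat m + Z.of_nat t) + 1)%Z by lia.
      apply cx_up; auto.
Qed.

Definition fx (c : nat) : pt := pscale (L / (L - 1)) (nu c).

Lemma fix_uniq c v : Ps c v = v -> v = fx c.
Proof.
  destruct v as [a b]. unfold Psi, fx, padd, pscale. destruct (nu c) as [n1 n2]. simpl. intros h. injection h. intros h2 h1.
  assert (e1 : n1 = a - / L * a) by lra. assert (e2 : n2 = b - / L * b) by lra.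
  rewrite e1, e2. f_equal; field; lra.
Qed.

Lemma psub_Ps c a v : psub (Ps c a) (Ps c v) = pscale (/ L) (psub a v).
Proof. unfold Psi. pdes; pext; ring. Qed.

Lemma Ps_K0 i k : ok i -> K0 k -> K0 (Ps i k).
Proof. intros hi hk. apply K0_self. exists i; split; auto. exists k; auto. Qed.

Lemma fixK0 c v : ok c -> Ps c v = v -> K0 v.
Proof.
  intros hc hv. apply NNPP; intro hn.
  destruct (K0_closed v hn) as [e [he hball]].
  destruct K0_ne as [k0 hk0].
  set (it := fix it (n : nat) : pt := match n with O => k0 | S n => Ps c (it n) end).
  assert (hK : forall n, K0 (it n)).
  { induction n; simpl; auto. apply Ps_K0; auto. }
  assert (hd : forall n, psub (it n) v = pscale (/ (L ^ n)) (psub k0 v)).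
  { induction n; simpl.
    - pdes; pext; field.
    - rewrite <- hv at 1. rewrite psub_Ps, IHn. pose proof (pow_ge1 n). pdes; pext; field; lra. }
  set (D := pnorm (psub k0 v)).
  destruct (Pow_x_infinity L ltac:(rewrite Rabs_right; lra) ((D + 1) / e)) as [n0 hn0].
  specialize (hn0 n0 (le_n _)). rewrite Rabs_right in hn0 by (pose proof (pow_ge1 n0); lra).
  apply (hball (it n0)); auto.
  unfold pdist. rewrite pnorm_sub_sym, hd, pnorm_scale.
  pose proof (pow_ge1 n0). rewrite Rabs_right by (apply Rle_ge; left; apply Rinv_0_lt_compat; lra).
  fold D. assert (0 <= D) by apply pnorm_nonneg.
  apply Rmult_lt_reg_l with (L ^ n0); [lra|].
  rewrite <- Rmult_assoc, Rinv_r by lra.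
  apply Rge_le in hn0. unfold Rdiv in hn0.
  apply Rmult_le_compat_r with (r := e) in hn0; [|lra].
  rewrite Rmult_assoc, Rinv_l in hn0 by lra. lra.
Qed.

Lemma V0_fix v : V0 v -> exists c, ok c /\ Ps c v = v.
Proof. intros [[c [hc h]] _]. eauto. Qed.

Lemma V0_K0 v : V0 v -> K0 v.
Proof. intros h. destruct (V0_fix v h) as [c [hc e]]. eapply fixK0; eauto. Qed.

Lemma V_step i v : ok i -> V0 v -> img (Ps i) K0 v -> exists u, V0 u /\ v = Ps i u.
Proof.
  intros hi hv himg. destruct (V0_fix v hv) as [c [hc e]].
  destruct (Nat.eq_dec c i) as [<-|hne].
  - exists v; auto.
  - assert (h1 : img (Ps c) K0 v) by (exists v; split; auto; apply V0_K0; auto).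
    destruct (nesting i c hi hc (not_eq_sym hne) v himg h1) as [u [hu ->]]. eauto.
Qed.

Lemma cancel_aff c a b s : c <> 0 -> padd (pscale c a) s = padd (pscale c b) s -> a = b.
Proof.
  intros hc h. destruct a as [a1 a2], b as [b1 b2], s as [s1 s2].
  unfold padd, pscale in h; simpl in h. injection h; intros h2 h1.
  f_equal; apply (Rmult_eq_reg_l c); auto; lra.
Qed.

Lemma NL : forall X Y m p, length X = length Y -> X <> Y -> okl X -> okl Y ->
  cx m X p -> cx m Y p -> exists u, V0 u /\ p = padd (pscale (powerRZ L m) u) (sh m X).
Proof.
  induction X as [|i X IH]; intros Y m p hlen hne hX hY h1 h2.
  - destruct Y; [congruence| simpl in hlen; lia].
  - destruct Y as [|j Y]; [simpl in hlen; lia|].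
    inversion hX as [|? ? hi hX']; subst. inversion hY as [|? ? hj hY']; subst.
    simpl in hlen. injection hlen as hlen.
    destruct (list_eq_dec Nat.eq_dec X Y) as [<-|hXY].
    + assert (hij : i <> j) by congruence.
      apply cx_cons in h1 as [k1 [hk1 e1]]. apply cx_cons in h2 as [k2 [hk2 e2]].
      rewrite e1 in e2. apply cancel_aff in e2; [|apply Rgt_not_eq, pw_pos].
      assert (hq1 : img (Ps i) K0 (Ps i k1)) by (exists k1; auto).
      assert (hq2 : img (Ps j) K0 (Ps i k1)) by (exists k2; auto).
      destruct (nesting i j hi hj hij _ hq1 hq2) as [u [hu eu]].
      exists u; split; auto. rewrite id_cons, e1, eu. reflexivity.
    + assert (h1' : cx (m+1) X p) by (apply K1; eauto).
      assert (h2' : cx (m+1) Y p) by (apply K1; eauto).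
      destruct (IH Y (m+1)%Z p hlen hXY hX' hY' h1' h2') as [u [hu eu]].
      apply cx_cons in h1 as [k1 [hk1 e1]].
      rewrite e1 in eu. apply cancel_aff in eu; [|apply Rgt_not_eq, pw_pos].
      assert (himg : img (Ps i) K0 u) by (exists k1; auto).
      destruct (V_step i u hi hu himg) as [u' [hu' eu']].
      exists u'; split; auto. rewrite id_cons, e1, eu, eu'. reflexivity.
Qed.

Definition pconv (s : nat -> pt) (l : pt) :=
  forall eps, 0 < eps -> exists N0, forall n, (N0 <= n)%nat -> pnorm (psub (s n) l) < eps.

Lemma SC (s : nat -> pt) : (forall n, K0 (s n)) ->
  exists phi l, strict phi /\ K0 l /\ pconv (fun n => s (phi n)) l.
Proof.
  intros hs. destruct K0_bounded as [r hr].
  assert (hb1 : forall n, -r <= fst (s n) <= r).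
  { intros n. pose proof (pnorm_fst (s n)). pose proof (hr _ (hs n)). apply abs_bounds; lra. }
  assert (hb2 : forall n, -r <= snd (s n) <= r).
  { intros n. pose proof (pnorm_snd (s n)). pose proof (hr _ (hs n)). apply abs_bounds; lra. }
  destruct (sub1 (fun n => fst (s n)) r hb1) as [f1 [l1 [hf1 hc1]]].
  destruct (sub1 (fun n => snd (s (f1 n))) r (fun n => hb2 (f1 n))) as [f2 [l2 [hf2 hc2]]].
  assert (hc1' := rconv_sub _ _ f2 hc1 hf2). simpl in hc1'.
  assert (hconv : pconv (fun n => s (f1 (f2 n))) (l1, l2)).
  { intros eps he. destruct (hc1' (eps/2) ltac:(lra)) as [N1 h1].
    destruct (hc2 (eps/2) ltac:(lra)) as [N2 h2]. exists (Nat.max N1 N2). intros n hn.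
    eapply Rle_lt_trans; [apply pnorm_le_coords|]. simpl.
    specialize (h1 n ltac:(lia)). specialize (h2 n ltac:(lia)). simpl in h1, h2. lra. }
  exists (fun n => f1 (f2 n)), (l1, l2). split; [apply strict_comp; auto|]. split; auto.
  apply NNPP; intro hn. destruct (K0_closed _ hn) as [e [he hball]].
  destruct (hconv e he) as [N0 h]. apply (hball (s (f1 (f2 N0)))); auto.
  unfold pdist. rewrite pnorm_sub_sym. apply h; lia.
Qed.

Lemma rho1 e : (forall k1 k2, K0 k1 -> K0 k2 -> padd (psub k1 k2) e <> pzero) ->
  exists rho, 0 < rho /\ forall k1 k2, K0 k1 -> K0 k2 -> rho <= pnorm (padd (psub k1 k2) e).
Proof.
  intros hdis. apply NNPP; intro h.
  assert (H : forall n : nat, exists q : pt * pt, K0 (fst q) /\ K0 (snd q) /\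
             pnorm (padd (psub (fst q) (snd q)) e) < / INR (S n)).
  { intros n. apply NNPP; intro hq. apply h. exists (/ INR (S n)).
    split; [apply Rinv_0_lt_compat, lt_0_INR; lia|].
    intros k1 k2 hk1 hk2. apply Rnot_lt_le; intro hlt. apply hq. exists (k1, k2); auto. }
  set (s := fun n => proj1_sig (constructive_indefinite_description _ (H n))).
  assert (hs : forall n, K0 (fst (s n)) /\ K0 (snd (s n)) /\
             pnorm (padd (psub (fst (s n)) (snd (s n))) e) < / INR (S n)).
  { intros n. unfold s. destruct (constructive_indefinite_description _ (H n)); simpl; auto. }
  destruct (SC (fun n => fst (s n)) (fun n => proj1 (hs n))) as [f1 [l1 [hf1 [hl1 hc1]]]].
  destruct (SC (fun n => snd (s (f1 n))) (fun n => proj1 (proj2 (hs (f1 n))))) as [f2 [l2 [hf2 [hl2 hc2]]]].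
  apply (hdis l1 l2 hl1 hl2). apply pnorm_zero.
  set (D := pnorm (padd (psub l1 l2) e)).
  assert (hD : 0 <= D) by apply pnorm_nonneg.
  destruct (Req_dec D 0) as [|hne]; auto. exfalso.
  assert (he3 : 0 < D / 3) by lra.
  destruct (hc1 _ he3) as [N1 h1]. destruct (hc2 _ he3) as [N2 h2].
  destruct (small_n _ he3) as [N3 h3].
  set (n := Nat.max N1 (Nat.max N2 N3)).
  set (m := f2 n).
  specialize (h1 m). specialize (h2 n ltac:(unfold n; lia)).
  assert (hm : (n <= m)%nat) by (apply strict_ge; auto).
  specialize (h1 ltac:(unfold n in *; lia)). simpl in h1, h2.
  destruct (hs (f1 m)) as [_ [_ h4]].
  assert (h5 : / INR (S (f1 m)) < D / 3).
  { apply h3. pose proof (strict_ge f1 hf1 m). unfold n in *; lia. }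
  assert (E : padd (psub l1 l2) e =
     padd (psub l1 (fst (s (f1 m)))) (padd (psub (snd (s (f1 m))) l2)
        (padd (psub (fst (s (f1 m))) (snd (s (f1 m)))) e))) by (pdes; pext; ring).
  assert (D <= pnorm (psub (fst (s (f1 m))) l1) + pnorm (psub (snd (s (f1 m))) l2)
             + pnorm (padd (psub (fst (s (f1 m))) (snd (s (f1 m)))) e)).
  { unfold D. rewrite E. eapply Rle_trans; [apply pnorm_triangle|].
    rewrite pnorm_sub_sym. eapply Rle_trans; [apply Rplus_le_compat_l, pnorm_triangle|]. lra. }
  unfold m in *. lra.
Qed.

Definition Ee i j c d := pscale L (padd (psub (nu i) (nu j)) (psub (fx d) (fx c))).

Definition Qr (e : pt) (rho : R) := (forall k1 k2, K0 k1 -> K0 k2 -> padd (psub k1 k2) e <> pzero) ->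
  forall k1 k2, K0 k1 -> K0 k2 -> rho <= pnorm (padd (psub k1 k2) e).

Lemma finlist : forall lst : list pt, (forall e, In e lst -> exists rho, 0 < rho /\ Qr e rho) ->
  exists rho, 0 < rho /\ forall e, In e lst -> Qr e rho.
Proof.
  induction lst as [|e0 lst IH]; intros h.
  - exists 1; split; [lra|]. intros e [].
  - destruct (h e0 (or_introl eq_refl)) as [r0 [hr0 hq0]].
    destruct IH as [r1 [hr1 hq1]]. { intros e he; apply h; right; auto. }
    exists (Rmin r0 r1). split; [apply Rmin_pos; auto|].
    intros e [<-|he] hd k1 k2 hk1 hk2.
    + eapply Rle_trans; [apply Rmin_l|]. apply hq0; auto.
    + eapply Rle_trans; [apply Rmin_r|]. apply hq1; auto.
Qed.

Lemma rho_all : exists rho, 0 < rho /\ forall i j c d, ok i -> ok j -> ok c -> ok d -> Qr (Ee i j c d) rho.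
Proof.
  set (s := seq 1 N).
  set (lst := flat_map (fun i => flat_map (fun j => flat_map (fun c =>
                map (fun d => Ee i j c d) s) s) s) s).
  destruct (finlist lst) as [rho [hr hq]].
  - intros e _. destruct (classic (forall k1 k2, K0 k1 -> K0 k2 -> padd (psub k1 k2) e <> pzero)) as [hd|hd].
    + destruct (rho1 e hd) as [r [h1 h2]]. exists r; split; auto. intros _; auto.
    + exists 1; split; [lra|]. intros hd'; contradiction.
  - exists rho; split; auto. intros i j c d hi hj hc hd. apply hq.
    unfold lst. assert (hs : forall x, ok x -> In x s) by (intros x hx; unfold s; apply in_seq; red in hx; lia).
    apply in_flat_map. exists i; split; auto.
    apply in_flat_map. exists j; split; auto.
    apply in_flat_map. exists c; split; auto.
    apply in_map_iff. exists d; split; auto.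
Qed.

Lemma shift_rel P u u' sX sY : padd (pscale P u) sX = padd (pscale P u') sY ->
  sX = padd sY (pscale P (psub u' u)).
Proof.
  destruct u, u', sX, sY; unfold padd, pscale, psub; simpl; intros h; injection h; intros.
  f_equal; lra.
Qed.

Lemma key_id P Lr k1 k2 ni nj sX sY fc fd : sX = padd sY (pscale (P*Lr) (psub fd fc)) ->
  psub (padd (pscale P k1) (padd (pscale (P*Lr) ni) sX)) (padd (pscale P k2) (padd (pscale (P*Lr) nj) sY))
  = pscale P (padd (psub k1 k2) (pscale Lr (padd (psub ni nj) (psub fd fc)))).
Proof. intros ->; pdes; pext; ring. Qed.

Lemma Sep : exists rho, 0 < rho /\ forall X Y n a b, length X = length Y -> okl X -> okl Y ->
  ~ (exists z, cx n X z /\ cx n Y z) -> cx n X a -> cx n Y b -> rho * powerRZ L n <= pnorm (psub a b).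
Proof.
  destruct rho_all as [rho [hr hQ]]. exists rho; split; auto.
  induction X as [|i X IH]; intros Y n a b hlen hX hY hdis ha hb.
  - destruct Y; [|simpl in hlen; lia]. exfalso. apply hdis. destruct K0_ne as [k hk].
    exists (padd (pscale (powerRZ L n) k) (sh n nil)). split; exists k; auto.
  - destruct Y as [|j Y]; [simpl in hlen; lia|].
    inversion hX as [|? ? hi hX']; subst. inversion hY as [|? ? hj hY']; subst.
    simpl in hlen. injection hlen as hlen.
    destruct (classic (exists z, cx (n+1) X z /\ cx (n+1) Y z)) as [[p [hp1 hp2]]|hnd].
    + assert (hcd : exists c d, ok c /\ ok d /\
               sh (n+1) X = padd (sh (n+1) Y) (pscale (powerRZ L (n+1)) (psub (fx d) (fx c)))).
      { destruct (list_eq_dec Nat.eq_dec X Y) as [<-|hne].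
        - exists 1%nat, 1%nat. split; [red; lia|]. split; [red; lia|].
          generalize (sh (n+1) X) (fx 1%nat) (powerRZ L (n+1)); intros s0 f0 q0; pdes; pext; ring.
        - destruct (NL X Y (n+1) p hlen hne hX' hY' hp1 hp2) as [u [hu eu]].
          destruct (NL Y X (n+1) p (eq_sym hlen) (not_eq_sym hne) hY' hX' hp2 hp1) as [u' [hu' eu']].
          destruct (V0_fix u hu) as [c [hc ec]]. destruct (V0_fix u' hu') as [d [hd ed]].
          apply fix_uniq in ec. apply fix_uniq in ed.
          exists c, d. split; auto. split; auto. rewrite <- ec, <- ed.
          apply shift_rel. rewrite <- eu, <- eu'. reflexivity. }
      destruct hcd as [c [d [hc [hd hsh]]]].
      rewrite pw_S in hsh.
      destruct ha as [k1 [hk1 ->]]. destruct hb as [k2 [hk2 ->]].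
      simpl sh. rewrite pw_S.
      rewrite (key_id _ _ k1 k2 (nu i) (nu j) _ _ (fx c) (fx d) hsh).
      rewrite pnorm_scale, Rabs_right by (left; apply pw_pos).
      fold (Ee i j c d). rewrite Rmult_comm.
      apply Rmult_le_compat_l; [left; apply pw_pos|].
      apply (hQ i j c d hi hj hc hd); auto.
      intros k1' k2' hk1' hk2' hz. apply hdis.
      exists (padd (pscale (powerRZ L n) k1') (sh n (i :: X))). split; [exists k1'; auto|].
      exists k2'. split; auto. unfold Ee in hz. apply (f_equal (pscale (powerRZ L n))) in hz.
      simpl sh. rewrite pw_S.
      rewrite <- (key_id _ _ k1' k2' (nu i) (nu j) _ _ (fx c) (fx d) hsh) in hz.
      revert hz. pdes; unfold padd, psub, pscale, pzero; simpl; intros hz; injection hz; intros.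
      f_equal; lra.
    + assert (ha' : cx (n+1) X a) by (apply K1; eauto).
      assert (hb' : cx (n+1) Y b) by (apply K1; eauto).
      specialize (IH Y (n+1)%Z a b hlen hX' hY' hnd ha' hb').
      eapply Rle_trans; [|exact IH]. rewrite pw_S.
      pose proof (pw_pos n). apply Rmult_le_compat_l; [lra|]. nra.
Qed.

Inductive ch (m : Z) : pt -> pt -> list (list nat) -> Prop :=
| ch1 a x y : cx m a x -> cx m a y -> ch m x y (a :: nil)
| chS a x z y ws : cx m a x -> cx m a z -> ch m z y ws -> ch m x y (a :: ws).

Lemma ch_head m x y ws : ch m x y ws -> exists a ws', ws = a :: ws' /\ cx m a x.
Proof. intros h; destruct h; eauto. Qed.

Lemma ch_restart m u x y a ws : ch m u y (a :: ws) -> cx m a x -> ch m x y (a :: ws).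
Proof. intros h hx. inversion h; subst. - apply ch1; auto. - eapply chS; eauto. Qed.

Lemma ch_app m x z y ws1 ws2 : ch m x z ws1 -> ch m z y ws2 -> ch m x y (ws1 ++ ws2).
Proof.
  intros h1 h2. induction h1.
  - simpl. eapply chS; eauto.
  - simpl. eapply chS; eauto.
Qed.

Lemma ch_suffix m ws1 : forall x y a ws2, ch m x y (ws1 ++ a :: ws2) -> exists u, ch m u y (a :: ws2).
Proof.
  induction ws1 as [|b ws1 IH]; intros x y a ws2 h; simpl in h.
  - eauto.
  - inversion h; subst.
    + destruct ws1; discriminate.
    + eapply IH; eauto.
Qed.

Lemma ch_short m x y ws : ch m x y ws -> exists ws', NoDup ws' /\ incl ws' ws /\ ch m x y ws'.
Proof.
  intros h. induction h.
  - exists (a :: nil). split; [constructor; [intros []|constructor]|]. split; [apply incl_refl|]. apply ch1; auto.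
  - destruct IHh as [ws' [hnd [hinc hch]]].
    destruct (In_dec (list_eq_dec Nat.eq_dec) a ws') as [hin|hnin].
    + apply in_split in hin as [w1 [w2 ->]].
      destruct (ch_suffix m w1 z y a w2 hch) as [u hu].
      exists (a :: w2). split; [apply NoDup_app_remove_l in hnd; auto|].
      split; [|eapply ch_restart; eauto].
      intros v [<-|hv]; [left; auto|]. right. apply hinc. apply in_app_iff. right. right. auto.
    + exists (a :: ws'). split; [constructor; auto|]. split.
      * intros v [<-|hv]; [left; auto|right; auto].
      * eapply chS; eauto.
Qed.

Lemma ch_nth m x y ws : ch m x y ws -> (1 <= length ws)%nat /\ cx m (nth 0 ws nil) x /\
  cx m (nth (length ws - 1) ws nil) y /\
  forall i, (i + 1 < length ws)%nat -> exists z, cx m (nth i ws nil) z /\ cx m (nth (i+1) ws nil) z.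
Proof.
  intros h. induction h.
  - simpl. repeat split; auto. intros i hi; lia.
  - destruct IHh as [h1 [h2 [h3 h4]]]. simpl length. split; [lia|]. split; auto. split.
    + replace (S (length ws) - 1)%nat with (S (length ws - 1)) by lia. simpl. auto.
    + intros [|i] hi.
      * exists z. simpl. auto.
      * simpl. destruct (h4 i ltac:(lia)) as [w hw]. exists w. replace (i + 1)%nat with (S i) in hw by lia.
        simpl in hw. replace (i + 1)%nat with (S i) by lia. auto.
Qed.

Lemma map_nth_seq_gen (l : list nat) d : forall s, map (fun t => nth (t - s) l d) (seq s (length l)) = l.
Proof.
  induction l as [|a l IH]; intros s; simpl; auto.
  rewrite Nat.sub_diag. f_equal. rewrite <- (IH (S s)) at 2. apply map_ext_in.
  intros t ht. apply in_seq in ht. replace (t - s)%nat with (S (t - S s)) by lia. reflexivity.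
Qed.

Lemma map_nth_seq (l : list nat) d : map (fun t => nth t l d) (seq 0 (length l)) = l.
Proof.
  rewrite <- (map_nth_seq_gen l d 0) at 2. apply map_ext. intros; f_equal; lia.
Qed.

Lemma shift_gen m (iota : nat -> nat) : forall n s,
  fold_right padd pzero (map (fun t => pscale (powerRZ L (m + 1 + Z.of_nat t)) (nu (iota t))) (seq s n))
  = sh (m + Z.of_nat s) (map iota (seq s n)).
Proof.
  induction n as [|n IH]; intros s; simpl; auto.
  rewrite IH. f_equal.
  - f_equal. f_equal. lia.
  - f_equal. lia.
Qed.

Lemma nth_ok (l : list nat) t : okl l -> ok (nth t (l ++ 1%nat :: nil) 1%nat).
Proof.
  intros h. assert (h' : okl (l ++ 1%nat :: nil)) by (apply (okl_pad l 1); auto).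
  destruct (Nat.lt_ge_cases t (length (l ++ 1%nat :: nil))) as [hl|hl].
  - eapply Forall_forall; [exact h'|]. apply nth_In; auto.
  - rewrite nth_overflow by auto. red; lia.
Qed.

Lemma cx_complex m w : okl w -> is_complex L N nu K0 m (cx m w).
Proof.
  intros hw. exists (length w), (fun t => nth t (w ++ 1%nat :: nil) 1%nat). split.
  - intros t _. apply nth_ok; auto.
  - intros z. unfold complex, Defs.shift.
    rewrite (shift_gen m _ (S (length w)) 0). simpl Z.of_nat. rewrite Z.add_0_r.
    replace (S (length w)) with (length (w ++ 1%nat :: nil)) by (rewrite length_app; simpl; lia).
    rewrite map_nth_seq. change (1%nat :: nil) with (repeat 1%nat 1). rewrite sh_pad. unfold cx. tauto.
Qed.

Lemma ch_formal m x y ws : ch m x y ws -> (forall w, In w ws -> okl w) ->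
  chain L N nu K0 m x y (length ws).
Proof.
  intros h hok. destruct (ch_nth m x y ws h) as [h1 [h2 [h3 h4]]].
  split; auto. exists (fun i => cx m (nth i ws nil)). split.
  - intros i hi. apply cx_complex. apply hok. apply nth_In; auto.
  - split; [|split]; auto.
Qed.

Definition Rb i j := ok i /\ ok j /\ exists q, img (Ps i) K0 q /\ img (Ps j) K0 q.

Lemma child_conn a b : ok a -> ok b -> clos_refl_trans_1n nat Rb a b.
Proof.
  intros ha hb. destruct V0_ne as [v0 hv0].
  assert (hV1 : forall c, ok c -> Vn L N nu 1 (Ps c v0)).
  { intros c hc. exists (c :: nil), v0. split; [reflexivity|]. split; [constructor; auto; constructor|]. split; auto. }
  assert (H : forall u w, clos_refl_trans_1n pt (V1_edge L N nu) u w -> w = Ps b v0 ->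
            forall i, ok i -> img (Ps i) V0 u -> clos_refl_trans_1n nat Rb i b).
  { intros u w hc. induction hc as [u|u u' w he hc IH]; intros hw i hi hu.
    - subst u. apply Relation_Operators.rt1n_trans with b; [|apply rt1n_refl].
      split; auto. split; auto. exists (Ps b v0). split.
      + destruct hu as [u1 [hu1 e]]. exists u1; split; auto. apply V0_K0; auto.
      + exists v0; split; auto. apply V0_K0; auto.
    - destruct he as [_ [_ [j [hj [hv1 hv2]]]]].
      apply Relation_Operators.rt1n_trans with j.
      + split; auto. split; auto. exists u. split.
        * destruct hu as [u1 [hu1 e]]. exists u1; split; auto. apply V0_K0; auto.
        * destruct hv1 as [u2 [hu2' e']]. exists u2; split; auto. apply V0_K0; auto.
      + apply IH; auto. }
  apply (H (Ps a v0) (Ps b v0)); auto.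
  - apply clos_rt_rt1n. apply V1conn; auto.
  - exists v0; auto.
Qed.

Definition nodes_ok (k : nat) (l : list nat) (ws : list (list nat)) :=
  forall w, In w ws -> exists u, length u = k /\ okl u /\ w = u ++ l.

Lemma U1 m (k : nat) : forall l x y, okl l -> cx (m + Z.of_nat k) l x -> cx (m + Z.of_nat k) l y ->
  exists ws, ch m x y ws /\ nodes_ok k l ws.
Proof.
  induction k as [|k IH]; intros l x y hl hx hy.
  - rewrite Z.add_0_r in hx, hy. exists (l :: nil). split; [apply ch1; auto|].
    intros w [<-|[]]. exists nil. split; auto. split; auto. constructor.
  - replace (m + Z.of_nat (S k))%Z with ((m + Z.of_nat k) + 1)%Z in hx, hy by lia.
    apply K1 in hx as [a [ha hx]]. apply K1 in hy as [b [hb hy]].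
    assert (hc := child_conn a b ha hb).
    assert (Hn : forall c ws, nodes_ok k (c :: l) ws -> ok c -> nodes_ok (S k) l ws).
    { intros c ws hn hc0 w hw. destruct (hn w hw) as [u [hu1 [hu2 ->]]].
      exists (u ++ c :: nil). split; [rewrite length_app; simpl; lia|]. split.
      - apply Forall_app; split; auto.
      - rewrite <- app_assoc. reflexivity. }
    revert x hx. induction hc as [a|a c b hR hc IHc]; intros x hx.
    + destruct (IH (a :: l) x y ltac:(constructor; auto) hx hy) as [ws [h1 h2]].
      exists ws; split; auto. eapply Hn; eauto.
    + destruct hR as [_ [hc0 [q [[k1 [hk1 e1]] [k2 [hk2 e2]]]]]].
      set (z := padd (pscale (powerRZ L (m + Z.of_nat k + 1)) q) (sh (m + Z.of_nat k + 1) l)).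
      assert (hz1 : cx (m + Z.of_nat k) (a :: l) z) by (apply cx_cons; exists k1; rewrite <- e1; auto).
      assert (hz2 : cx (m + Z.of_nat k) (c :: l) z) by (apply cx_cons; exists k2; rewrite <- e2; auto).
      destruct (IH (a :: l) x z ltac:(constructor; auto) hx hz1) as [ws1 [h1 h1n]].
      destruct (IHc hc0 hb hy z hz2) as [ws2 [h2 h2n]].
      exists (ws1 ++ ws2). split; [eapply ch_app; eauto|].
      intros w hw. apply in_app_or in hw as [hw|hw]; [eapply Hn; eauto|apply h2n; auto].
Qed.

Fixpoint words (k : nat) : list (list nat) :=
  match k with
  | O => nil :: nil
  | S k => flat_map (fun i => map (cons i) (words k)) (seq 1 N)
  end.

Lemma flat_map_len (W : list (list nat)) s :
  length (flat_map (fun i => map (cons i) W) s) = (length s * length W)%nat.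
Proof. induction s; simpl; auto. rewrite length_app, length_map, IHs. lia. Qed.

Lemma words_len k : length (words k) = (N ^ k)%nat.
Proof. induction k; simpl; auto. rewrite flat_map_len, length_seq, IHk. reflexivity. Qed.

Lemma words_in k : forall u, length u = k -> okl u -> In u (words k).
Proof.
  induction k; intros u hl hu.
  - destruct u; [left; auto|simpl in hl; lia].
  - destruct u as [|i u]; [simpl in hl; lia|]. inversion hu; subst. simpl in hl.
    simpl. apply in_flat_map. exists i. split.
    + apply in_seq. red in H1. lia.
    + apply in_map. apply IHk; auto.
Qed.

Lemma short_bound m x y k l ws : ch m x y ws -> nodes_ok k l ws ->
  exists ws', ch m x y ws' /\ nodes_ok k l ws' /\ (length ws' <= N ^ k)%nat.
Proof.
  intros h hn. destruct (ch_short m x y ws h) as [ws' [hnd [hinc hch]]].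
  assert (hn' : nodes_ok k l ws') by (intros w hw; apply hn, hinc, hw).
  exists ws'. split; auto. split; auto.
  rewrite <- words_len. rewrite <- (length_map (fun u => u ++ l) (words k)).
  apply NoDup_incl_length; auto.
  intros w hw. destruct (hn' w hw) as [u [hu1 [hu2 ->]]]. apply (in_map (fun u0 => u0 ++ l)). apply words_in; auto.
Qed.

Lemma least (P : nat -> Prop) n0 : P n0 -> exists n, P n /\ forall m, P m -> (n <= m)%nat.
Proof.
  revert P. induction n0 as [n0 IH] using lt_wf_ind. intros P h.
  destruct (classic (exists m, (m < n0)%nat /\ P m)) as [[m [hm hp]]|hno].
  - apply (IH m hm P hp).
  - exists n0. split; auto. intros m hm. destruct (Nat.le_gt_cases n0 m) as [hle|hlt]; auto. exfalso. apply hno. eauto.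
Qed.

Lemma cx_diam M D r : (forall p, K0 p -> pnorm p <= r) -> is_complex L N nu K0 M D ->
  forall z z', D z -> D z' -> pnorm (psub z z') <= 2 * r * powerRZ L M.
Proof.
  intros hr [mm [iota [_ hD]]] z z' hz hz'. apply hD in hz as [k [hk ->]]. apply hD in hz' as [k' [hk' ->]].
  replace (psub _ _) with (pscale (powerRZ L M) (psub k k')) by (generalize (Defs.shift L nu M mm iota); intros; pdes; pext; ring).
  rewrite pnorm_scale, Rabs_right by (left; apply pw_pos).
  pose proof (pnorm_sub_le k k'). pose proof (hr k hk). pose proof (hr k' hk'). pose proof (pw_pos M). nra.
Qed.

Lemma lower_bound M r x y n : (forall p, K0 p -> pnorm p <= r) -> chain L N nu K0 M x y n ->
  pnorm (psub x y) <= INR n * (2 * r * powerRZ L M).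
Proof.
  intros hr [hn [D [hD [h0 [hy hc]]]]].
  assert (H : forall i, (i < n)%nat -> forall w, D i w -> pnorm (psub x w) <= INR (S i) * (2 * r * powerRZ L M)).
  { induction i; intros hi w hw.
    - simpl. rewrite Rmult_1_l. eapply cx_diam; eauto; apply hD; lia.
    - destruct (hc i ltac:(lia)) as [z [hz1 hz2]]. replace (i + 1)%nat with (S i) in hz2 by lia.
      specialize (IHi ltac:(lia) z hz1).
      assert (pnorm (psub z w) <= 2 * r * powerRZ L M) by (eapply cx_diam; eauto; apply hD; lia).
      eapply Rle_trans; [apply (pnorm_sub_tri x z w)|]. rewrite S_INR. lra. }
  assert (H2 := H (n - 1)%nat ltac:(lia) y hy). replace (S (n - 1)) with n in H2 by lia. exact H2.
Qed.

Lemma pdist_refl x : pdist x x = 0.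
Proof.
  unfold pdist, pnorm, pdot, psub. destruct x; simpl.
  replace ((r - r) * (r - r) + (r0 - r0) * (r0 - r0)) with 0 by ring. apply sqrt_0.
Qed.


Lemma ln_le a b : 0 < a -> a <= b -> ln a <= ln b.
Proof. intros ha [h|h]; [left; apply ln_increasing; auto|subst; lra]. Qed.

Lemma exp_le a b : a <= b -> exp a <= exp b.
Proof. intros [h|h]; [left; apply exp_increasing; auto|subst; lra]. Qed.

Lemma main M : exists C6 C7 : R, 0 < C6 /\ 0 < C7 /\
    forall x y, Kinf L K0 x -> Kinf L K0 y ->
      exists n : nat, dM_is L N nu K0 M x y n /\
        C6 * pdist x y <= INR n /\
        INR n <= Rmax 2 (C7 * rpow (pdist x y) (ln (INR N) / ln L)).
Proof.
  destruct Sep as [rho [hrho hsep]].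
  destruct K0_bounded as [r0 hr0].
  set (r := Rabs r0 + 1).
  assert (hr : forall p, K0 p -> pnorm p <= r).
  { intros p hp. pose proof (hr0 p hp). pose proof (Rle_abs r0). unfold r; lra. }
  assert (hrpos : 0 < r) by (unfold r; pose proof (Rabs_pos r0); lra).
  assert (hlnL : 0 < ln L) by (rewrite <- ln_1; apply ln_increasing; lra).
  assert (hN2 : 2 <= INR N) by (replace 2 with (INR 2) by (simpl; lra); apply le_INR; auto).
  assert (hlnN : 0 <= ln (INR N)) by (rewrite <- ln_1; apply ln_le; lra).
  set (df := ln (INR N) / ln L).
  assert (hdf : 0 <= df) by (unfold df; apply Rmult_le_pos; [lra|left; apply Rinv_0_lt_compat; lra]).
  assert (hdfL : df * ln L = ln (INR N)) by (unfold df; field; lra).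
  set (c0 := exp (df * ln rho + (IZR M - 1) * ln (INR N))).
  assert (hc0 : 0 < c0) by apply exp_pos.
  pose proof (pw_pos M) as hPM.
  exists (/ (2 * r * powerRZ L M)), (2 / c0).
  split; [apply Rinv_0_lt_compat; nra|]. split; [unfold Rdiv; apply Rmult_lt_0_compat; [lra|apply Rinv_0_lt_compat; lra]|].
  intros x y hx hy.
  destruct (classic (x = y)) as [<-|hxy].
  - exists 0%nat. split; [left; auto|]. rewrite pdist_refl. simpl INR. split; [lra|].
    eapply Rle_trans with 2; [lra|apply Rmax_l].
  - set (d := pdist x y).
    assert (hd : 0 < d).
    { destruct (pnorm_nonneg (psub x y)) as [h|h]; [exact h|]. exfalso. apply hxy.
      symmetry in h. apply pnorm_zero in h. revert h. destruct x, y; unfold psub, pzero; simpl.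
      intros h; injection h; intros; f_equal; lra. }
    assert (hex : exists k : nat, d < rho * powerRZ L (M + Z.of_nat k)).
    { destruct (Pow_x_infinity L ltac:(rewrite Rabs_right; lra) (d / (rho * powerRZ L M) + 1)) as [k hk].
      exists k. specialize (hk k (le_n _)). rewrite Rabs_right in hk by (pose proof (pow_ge1 k); lra).
      rewrite pw_nat. apply Rge_le in hk.
      assert (hq : 0 < rho * powerRZ L M) by nra.
      apply Rmult_le_compat_l with (r := rho * powerRZ L M) in hk; [|lra].
      replace (rho * powerRZ L M * (d / (rho * powerRZ L M) + 1)) with (d + rho * powerRZ L M) in hk by (field; lra).
      lra. }
    destruct hex as [k0 hk0].
    destruct (least (fun k => d < rho * powerRZ L (M + Z.of_nat k)) k0 hk0) as [k [hk hkmin]].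
    destruct (Kinf_cx x hx (M + Z.of_nat k)) as [lx [hlx hxl]].
    destruct (Kinf_cx y hy (M + Z.of_nat k)) as [ly [hly hyl]].
    set (lx' := lx ++ repeat 1%nat (length ly)). set (ly' := ly ++ repeat 1%nat (length lx)).
    assert (hxl' : cx (M + Z.of_nat k) lx' x) by (apply cx_pad; auto).
    assert (hyl' : cx (M + Z.of_nat k) ly' y) by (apply cx_pad; auto).
    assert (hlen : length lx' = length ly') by (unfold lx', ly'; rewrite !length_app, !repeat_length; lia).
    assert (hlx' : okl lx') by (apply okl_pad; auto).
    assert (hly' : okl ly') by (apply okl_pad; auto).
    destruct (classic (exists z, cx (M + Z.of_nat k) lx' z /\ cx (M + Z.of_nat k) ly' z)) as [[p [hp1 hp2]]|hno].
    2:{ exfalso. pose proof (hsep lx' ly' (M + Z.of_nat k)%Z x y hlen hlx' hly' hno hxl' hyl').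
        unfold d, pdist in hk. lra. }
    destruct (U1 M k lx' x p hlx' hxl' hp1) as [ws1 [hc1 hn1]].
    destruct (U1 M k ly' p y hly' hp2 hyl') as [ws2 [hc2 hn2]].
    destruct (short_bound M x p k lx' ws1 hc1 hn1) as [ws1' [hc1' [hn1' hl1]]].
    destruct (short_bound M p y k ly' ws2 hc2 hn2) as [ws2' [hc2' [hn2' hl2]]].
    assert (hch := ch_app M x p y ws1' ws2' hc1' hc2').
    assert (hok : forall w, In w (ws1' ++ ws2') -> okl w).
    { intros w hw. apply in_app_or in hw as [hw|hw].
      - destruct (hn1' w hw) as [u [_ [hu ->]]]. apply Forall_app; auto.
      - destruct (hn2' w hw) as [u [_ [hu ->]]]. apply Forall_app; auto. }
    assert (hchain := ch_formal M x y _ hch hok).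
    destruct (least (fun n => chain L N nu K0 M x y n) _ hchain) as [n [hn hnmin]].
    exists n. split; [right; auto|].
    assert (hnle : (n <= 2 * N ^ k)%nat).
    { pose proof (hnmin _ hchain). rewrite length_app in H. lia. }
    split.
    + pose proof (lower_bound M r x y n hr hn) as hlb. fold (pdist x y) in hlb. fold d in hlb.
      assert (hq : 0 < 2 * r * powerRZ L M) by nra.
      apply (Rmult_le_reg_r (2 * r * powerRZ L M)); [auto|].
      replace (/ (2 * r * powerRZ L M) * d * (2 * r * powerRZ L M)) with d by (field; lra). lra.
    + assert (hINR : INR n <= 2 * INR N ^ k).
      { apply le_INR in hnle. rewrite mult_INR, pow_INR in hnle.
        replace (INR 2) with 2 in hnle by (simpl; lra). exact hnle. }
      destruct k as [|k'].
      * simpl in hINR. apply Rle_trans with 2; [lra|apply Rmax_l].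
      * eapply Rle_trans; [exact hINR|]. eapply Rle_trans; [|apply Rmax_r].
        assert (hprev : rho * powerRZ L (M + Z.of_nat k') <= d).
        { destruct (Rle_lt_dec (rho * powerRZ L (M + Z.of_nat k')) d) as [h|h]; auto.
          specialize (hkmin k' h). lia. }
        unfold rpow. destruct (Req_EM_T d 0) as [h0|_]; [lra|]. unfold Rpower.
        pose proof (pw_pos (M + Z.of_nat k')) as hP.
        assert (hln : ln rho + IZR (M + Z.of_nat k') * ln L <= ln d).
        { rewrite powerRZ_Rpower in hprev by lra.
          assert (hpos : 0 < rho * Rpower L (IZR (M + Z.of_nat k'))) by (rewrite <- powerRZ_Rpower by lra; nra).
          assert (h1 := ln_le _ _ hpos hprev).
          rewrite ln_mult in h1; [|lra|unfold Rpower; apply exp_pos].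
          rewrite ln_Rpower in h1. lra. }
        assert (hB : df * ln rho + IZR (M + Z.of_nat k') * ln (INR N) <= df * ln d).
        { rewrite <- hdfL. apply Rmult_le_compat_l with (r := df) in hln; auto. nra. }
        apply exp_le in hB.
        rewrite plus_IZR, <- INR_IZR_INZ in hB.
        replace (df * ln rho + (IZR M + INR k') * ln (INR N))
          with ((df * ln rho + (IZR M - 1) * ln (INR N)) + INR (S k') * ln (INR N)) in hB
          by (rewrite S_INR; ring).
        rewrite exp_plus in hB. fold c0 in hB.
        assert (hpow : exp (INR (S k') * ln (INR N)) = INR N ^ S k').
        { rewrite <- Rpower_pow by lra. reflexivity. }
        rewrite hpow in hB.
        apply Rmult_le_compat_l with (r := 2 / c0) in hB; [|left; unfold Rdiv; apply Rmult_lt_0_compat; [lra|apply Rinv_0_lt_compat; lra]].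
        replace (2 / c0 * (c0 * INR N ^ S k')) with (2 * INR N ^ S k') in hB by (field; lra).
        exact hB.
Qed.
End Frac.

Theorem lemmaA3 (L : R) (N : nat) (nu : nat -> pt) (K0 : pt -> Prop) :
  1 < L -> (2 <= N)%nat -> nu 1%nat = pzero ->
  simple_nested_fractal L N nu K0 ->
  (exists a b c, a <> b /\ a <> c /\ b <> c /\ essential_fixed L N nu a /\
     essential_fixed L N nu b /\ essential_fixed L N nu c) ->
  forall M : Z, exists C6 C7 : R, 0 < C6 /\ 0 < C7 /\
    forall x y, Kinf L K0 x -> Kinf L K0 y ->
      exists n : nat, dM_is L N nu K0 M x y n /\
        C6 * pdist x y <= INR n /\
        INR n <= Rmax 2 (C7 * rpow (pdist x y) (ln (INR N) / ln L)).
Proof.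
  intros HL HN Hnu1 Hsnf _ M.
  exact (main L N nu K0 HL HN Hnu1 Hsnf M).
Qed.
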